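(* Let $G$ be a finite group of even order. Then the power graph $\mathscr{G}(G)$ is not overfull.
   Context: For a finite group $G$, the power graph $\mathscr{G}(G)$ is the simple graph with vertex set the elements of $G$, in which two distinct elements $a,b$ are adjacent if and only if one is a power of the other. For a finite simple graph $\Gamma$ on $n$ vertices with maximum vertex degree $\Delta(\Gamma)$, $\Gamma$ is called overfull if $|E(\Gamma)| / \lfloor n/2 \rfloor > \Delta(\Gamma)$. *)

(* Defs.v *)
From mathcomp Require Import all_boot all_order all_algebra all_fingroup.
Set Implicit Arguments. Unset Strict Implicit. Unset Printing Implicit Defensive.
Import GRing.Theory Num.Theory.

Definition pg_adj (gT : finGroupType) (a b : gT) : bool :=
  (a != b) && ((a \in cycle b) || (b \in cycle a)).

Definition pg_edges (gT : finGroupType) (G : {set gT}) : {set {set gT}} :=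
  [set e : {set gT} | [exists a in G, exists b in G,
                       pg_adj a b && (e == [set a; b])]].

Definition pg_deg (gT : finGroupType) (G : {set gT}) (x : gT) : nat :=
  #|[set y in G | pg_adj x y]|.

Definition pg_maxdeg (gT : finGroupType) (G : {set gT}) : nat :=
  \max_(x in G) pg_deg G x.

Definition overfull_power_graph (gT : finGroupType) (G : {set gT}) : bool :=
  ((pg_maxdeg G)%:R < (#|pg_edges G|)%:R / ((#|G|)./2)%:R :> rat)%R.

(* Main.v *)
Require Import Defs.
From mathcomp Require Import all_boot all_order all_algebra all_fingroup.
Import Order.TTheory GRing.Theory Num.Theory.
Set Implicit Arguments. Unset Strict Implicit. Unset Printing Implicit Defensive.

Lemma edges_le (gT : finGroupType) (G : {group gT}) :
  #|pg_edges G| <= 'C(#|G|, 2).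
Proof.
rewrite -(cards_draws (G : {set gT})); apply: subset_leq_card; apply/subsetP => e.
rewrite !inE => /existsP[a /andP[aG /existsP[b /andP[bG /andP[/andP[ab _] /eqP->]]]]].
rewrite cards2 ab eqxx andbT; apply/subsetP => x; rewrite !inE.
by case/orP => /eqP->.
Qed.

Lemma deg_ge (gT : finGroupType) (G : {group gT}) :
  #|G|.-1 <= pg_maxdeg G.
Proof.
have H : pg_deg G 1%g <= pg_maxdeg G by rewrite /pg_maxdeg; apply: (leq_bigmax_cond (F := fun x => pg_deg G x)); exact: group1.
apply: leq_trans H.
rewrite /pg_deg (cardsD1 1%g G) group1 /=.
apply: subset_leq_card; apply/subsetP => y; rewrite !inE => /andP[y1 yG].
by rewrite yG /pg_adj eq_sym y1 group1.
Qed.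

Theorem mainTheorem3 (gT : finGroupType) (G : {group gT}) :
  ~~ odd #|G| -> ~~ overfull_power_graph G.
Proof.
move=> ev; rewrite /overfull_power_graph -leNgt.
have hE := edges_le G; have hD := deg_ge G.
have e : #|G| = (#|G|./2).*2.
  by have := odd_double_half #|G|; rewrite (negbTE ev) add0n.
move: hE hD; rewrite e doubleK; set m := #|G|./2 => hE hD.
have [->|m0] := posnP m; first by rewrite invr0 mulr0.
rewrite ler_pdivrMr ?ltr0n // -natrM ler_nat.
apply: leq_trans hE _; rewrite bin2 -doubleMl doubleK mulnC leq_mul2r hD orbT.
by [].
Qed.
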